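(* Let $\delta\in[0,1]$, let $(U,\mathcal{P})$ be an instance of MESC with $\mathcal{P}=\{P_1,\dots,P_k\}$, let $BG$ be any cover output by BiasedGreedy($\delta$), with Light set $L$ and Heavy set $H=U\setminus L$, and let $OPT$ be any cover. For $v\in U$ write $a_v=|P_{BG(v)}|$, and for $i\in[k]$ let $x_i=|OPT^{-1}(i)|$ and $y_i=|OPT^{-1}(i)\cap H|$. Then: (1) for every $i\in[k]$ and every $v\in OPT^{-1}(i)\cap L$, $a_v\ge x_i$; (2) for every $i\in[k]$, $\prod_{v\in OPT^{-1}(i)\cap H} a_v\ \ge\ y_i!$. Consequently, \[ -\frac1n\sum_{v\in U}\log_2 a_v\ \le\ Ent(OPT)-\log_2 n-\frac1n\sum_{i=1}^{k}y_i\log_2\frac{y_i}{x_i}+\frac{n-\lceil\delta n\rceil}{n}\log_2 e . \]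
   Context: Minimum Entropy Set Cover (MESC): an instance is a finite ground set $U$ with $|U|=n\ge1$ and a family $\mathcal{P}=\{P_1,\dots,P_k\}$ of subsets of $U$ with $\bigcup_i P_i=U$. A cover is a function $g:U\to[k]$ with $u\in P_{g(u)}$ for all $u\in U$. Its entropy is $Ent(g)=-\sum_{i=1}^{k}\frac{|g^{-1}(i)|}{n}\log_2\frac{|g^{-1}(i)|}{n}$ (with $0\log_2 0=0$; terms with $y_i=0$ in $\sum y_i\log_2(y_i/x_i)$ are taken as $0$). The frequency of an element $u$ is the number of indices $i$ with $u\in P_i$. Algorithm BiasedGreedy($\delta$), $\delta\in[0,1]$: let $L\subseteq U$ be a set of $\lceil\delta n\rceil$ elements of smallest frequency (ties broken arbitrarily) (''Light'' elements) and $H=U\setminus L$ (''Heavy'' elements). Phase 1: for every $e\in L$, set $g(e)=i_e$ where $i_e$ maximizes $|P_{i}|$ over all $i$ with $e\in P_i$. Phase 2: initialize $Q_i=P_i\setminus L$ for all $i\in[k]$; while $H\neq\emptyset$: pick any $e\in H$, set $g(e)=i_e$ where $i_e$ maximizes the current $|Q_i|$ over all $i$ with $e\in Q_i$, then delete $e$ from every $Q_i$ and from $H$. The output is the cover $g$. *)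

(* Defs.v *)
From Stdlib Require Import Reals.
From mathcomp Require Import all_boot.

Set Implicit Arguments.
Unset Strict Implicit.
Unset Printing Implicit Defensive.

Definition log2 (x : R) : R := Rdiv (ln x) (ln 2).

(* ceiling of a real, via Int_part (= floor): ceil x = - floor (- x) *)
Definition nceil (x : R) : nat := Z.to_nat (- Int_part (Ropp x))%Z.

Section MESC.
Variables (U : finType) (k : nat) (P : 'I_k -> {set U}).

Definition freq (u : U) : nat := #|[set i : 'I_k | u \in P i]|.

Definition is_cover (g : U -> 'I_k) : Prop := forall u, u \in P (g u).

Definition preim_card (g : U -> 'I_k) (i : 'I_k) : nat := #|[set u | g u == i]|.

Local Open Scope R_scope.

Definition negplogp (c n : nat) : R :=
  if (c == 0)%N then 0 else - (INR c / INR n) * log2 (INR c / INR n).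

Definition Ent (g : U -> 'I_k) : R :=
  \big[Rplus/0]_(i < k) negplogp (preim_card g i) #|U|.

Definition ylogyx (y x : nat) : R :=
  if (y == 0)%N then 0 else INR y * log2 (INR y / INR x).

Local Close Scope R_scope.

Definition is_BiasedGreedy_output (delta : R) (L : {set U}) (g : U -> 'I_k) : Prop :=
  (* L: ceil(delta n) elements of smallest frequency (ties arbitrary) *)
  #|L| = nceil (Rmult delta (INR #|U|)) /\
  (forall u v, u \in L -> v \notin L -> freq u <= freq v) /\
  (* Phase 1: each light e goes to a set of maximum size containing it *)
  (forall e, e \in L ->
     e \in P (g e) /\ (forall i, e \in P i -> #|P i| <= #|P (g e)|)) /\
  (* Phase 2: heavy elements processed in an arbitrary order s; when e is
     processed, Q_i = P_i \ L \ (already processed), and g e maximizes |Q_i|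
     among the i with e \in Q_i *)
  (exists s : seq U,
     uniq s /\ (forall x, (x \in s) = (x \notin L)) /\
     forall (s1 : seq U) (e : U) (s2 : seq U), s = s1 ++ e :: s2 ->
       let Q := fun i : 'I_k => P i :\: L :\: [set x in s1] in
       e \in Q (g e) /\ (forall i, e \in Q i -> #|Q i| <= #|Q (g e)|)).

End MESC.

(* Main.v *)
From HB Require Import structures.
Require Import Defs.
From Stdlib Require Import Reals Lra.
From mathcomp Require Import all_boot.

HB.instance Definition _ := Monoid.isComLaw.Build R (IZR 0) Rplus
  (fun a b c => esym (Rplus_assoc a b c)) Rplus_comm Rplus_0_l.

Local Open Scope R_scope.

Lemma sumR_scale (I : Type) (r : seq I) (p : pred I) (c : R) (F : I -> R) :
  \big[Rplus/0]_(i <- r | p i) (c * F i) = c * \big[Rplus/0]_(i <- r | p i) F i.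
Proof. apply: (big_rec2 (fun a b => a = c * b)); first ring.
by move=> i a b _ ->; ring. Qed.

Lemma sumR_scaler (I : Type) (r : seq I) (p : pred I) (c : R) (F : I -> R) :
  \big[Rplus/0]_(i <- r | p i) (F i * c) = (\big[Rplus/0]_(i <- r | p i) F i) * c.
Proof. apply: (big_rec2 (fun a b => a = b * c)); first ring.
by move=> i a b _ ->; ring. Qed.

Lemma sumR_add (I : Type) (r : seq I) (p : pred I) (F G : I -> R) :
  \big[Rplus/0]_(i <- r | p i) (F i + G i) =
  \big[Rplus/0]_(i <- r | p i) F i + \big[Rplus/0]_(i <- r | p i) G i.
Proof. exact: big_split. Qed.

Lemma sumR_le (I : Type) (r : seq I) (p : pred I) (F G : I -> R) :
  (forall i, p i -> F i <= G i) ->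
  \big[Rplus/0]_(i <- r | p i) F i <= \big[Rplus/0]_(i <- r | p i) G i.
Proof. move=> H; apply: (big_ind2 (fun a b => a <= b)); first lra.
  by move=> *; lra. exact: H. Qed.

Lemma sumR_INR (I : Type) (r : seq I) (p : pred I) (F : I -> nat) :
  \big[Rplus/0]_(i <- r | p i) INR (F i) = INR (\sum_(i <- r | p i) F i)%N.
Proof. apply: (big_rec2 (fun a b => a = INR b)); first by [].
by move=> i a b _ ->; rewrite plus_INR. Qed.

Lemma ln_le' x y : 0 < x -> x <= y -> ln x <= ln y.
Proof. move=> Hx [H|->]; last lra. left; exact: ln_increasing. Qed.

Lemma ln_prod (I : Type) (r : seq I) (p : pred I) (F : I -> nat) :
  (forall i, p i -> (0 < F i)%N) ->
  ln (INR (\prod_(i <- r | p i) F i)%N) = \big[Rplus/0]_(i <- r | p i) ln (INR (F i)).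
Proof.
move=> HF.
suff [_ ->] : 0 < INR (\prod_(i <- r | p i) F i)%N /\
  \big[Rplus/0]_(i <- r | p i) ln (INR (F i)) = ln (INR (\prod_(i <- r | p i) F i)%N) by [].
apply: (big_rec2 (fun a b => 0 < INR b /\ a = ln (INR b))).
  by split; [simpl; lra | rewrite ln_1].
move=> i a b Hi [Hb ->]; have Hf : 0 < INR (F i) by apply: lt_0_INR; apply/ltP; exact: HF.
rewrite mult_INR; split; first exact: Rmult_lt_0_compat.
by rewrite ln_mult.
Qed.

Lemma ln_1px t : 0 <= t -> ln (1 + t) <= t.
Proof.
move=> [Ht|<-]; last by rewrite Rplus_0_r ln_1; lra.
have H := exp_ineq1 t (Rgt_not_eq _ _ Ht).
rewrite -{2}(ln_exp t); apply: ln_le'; lra.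
Qed.

Lemma ln_fact y : INR y * ln (INR y) - INR y <= ln (INR y`!).
Proof.
elim: y => [|y IH]; first by rewrite /= ln_1; lra.
rewrite factS mult_INR ln_mult; last first.
  by apply: lt_0_INR; apply/ltP; exact: fact_gt0.
  by apply: lt_0_INR; apply/ltP.
suff: INR y * ln (INR y.+1) - INR y * ln (INR y) <= 1.
  rewrite S_INR; lra.
case: y {IH} => [|y]; first by rewrite /=; lra.
have Hy : 0 < INR y.+1 by apply: lt_0_INR; apply/ltP.
have -> : INR y.+2 = INR y.+1 * (1 + / INR y.+1).
  rewrite (S_INR y.+1); field; lra.
rewrite ln_mult; last first.
  have := Rinv_0_lt_compat _ Hy; lra. lra.
have := ln_1px (/ INR y.+1) (Rlt_le _ _ (Rinv_0_lt_compat _ Hy)).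
move=> H.
have: INR y.+1 * ln (1 + / INR y.+1) <= INR y.+1 * / INR y.+1.
  apply: Rmult_le_compat_l; lra.
rewrite Rinv_r; lra.
Qed.

Lemma sumR_opp (I : Type) (r : seq I) (p : pred I) (F : I -> R) :
  \big[Rplus/0]_(i <- r | p i) (- F i) = - \big[Rplus/0]_(i <- r | p i) F i.
Proof. apply: (big_rec2 (fun a b => a = - b)); first ring.
by move=> i a b _ ->; ring. Qed.

Lemma sumR_sub (I : Type) (r : seq I) (p : pred I) (F G : I -> R) :
  \big[Rplus/0]_(i <- r | p i) (F i - G i) =
  \big[Rplus/0]_(i <- r | p i) F i - \big[Rplus/0]_(i <- r | p i) G i.
Proof. rewrite /Rminus sumR_add sumR_opp //. Qed.
Local Close Scope R_scope.

Lemma big_seq_set (T : finType) (R : Type) (idx : R) (op : Monoid.com_law idx)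
  (s : seq T) (A p : pred T) (F : T -> R) :
  uniq s -> (forall x, (x \in s) = A x) ->
  \big[op/idx]_(v | p v && A v) F v = \big[op/idx]_(v <- s | p v) F v.
Proof.
move=> us ms.
rewrite [RHS]big_mkcond (big_uniq _ us) [RHS]big_mkcond [LHS]big_mkcond.
apply: eq_bigr => v _; rewrite ms; by case: (p v); case: (A v).
Qed.

Lemma greedy_prod (U : finType) k (P : 'I_k -> {set U}) (L : {set U})
  (BG OPT : U -> 'I_k) (s : seq U) (i : 'I_k) :
  is_cover P OPT -> uniq s -> (forall x, (x \in s) = (x \notin L)) ->
  (forall (s1 : seq U) (e : U) (s2 : seq U), s = s1 ++ e :: s2 ->
       let Q := fun i : 'I_k => P i :\: L :\: [set x in s1] in
       e \in Q (BG e) /\ (forall i, e \in Q i -> #|Q i| <= #|Q (BG e)|)) ->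
  forall s1 s2, s = s1 ++ s2 ->
  (count (fun v => OPT v == i) s2)`! <= \prod_(v <- s2 | OPT v == i) #|P (BG v)|.
Proof.
move=> cov us ms H s1 s2; elim: s2 s1 => [|e s2 IH] s1 Es; first by rewrite big_nil.
rewrite big_cons /=.
have IH' := IH (rcons s1 e) ltac:(by rewrite cat_rcons Es).
case: ifP => Hi; last by rewrite add0n.
rewrite add1n factS; apply: leq_mul; last exact: IH'.
move: (H s1 e s2 Es); cbv zeta => -[Hin Hmax].
set Q := fun j : 'I_k => P j :\: L :\: [set x in s1].
have us' : uniq (s1 ++ e :: s2) by rewrite -Es.
move: (us'); rewrite cat_uniq => /and3P [_ Hdis us2].
have memQ : forall v, v \in e :: s2 -> OPT v == i -> v \in Q i.
  move=> v Hvs Hv; rewrite /Q !inE.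
  have -> : v \in P i by rewrite -(eqP Hv); exact: cov.
  have -> : v \notin L by rewrite -ms Es mem_cat Hvs orbT.
  have -> : v \notin s1 by apply: (hasPn Hdis).
  by [].
have Hei : e \in Q i by apply: memQ; rewrite ?inE ?eqxx.
have HQP : #|Q (BG e)| <= #|P (BG e)|.
  rewrite /Q; apply: leq_trans (subset_leq_card (subsetDl _ _)) _.
  exact: subset_leq_card (subsetDl _ _).
apply: leq_trans (leq_trans (Hmax i Hei) HQP).
have -> : (count (fun v => OPT v == i) s2).+1 = size (filter (fun v => OPT v == i) (e :: s2)).
  by rewrite size_filter /= Hi.
rewrite cardE; apply: uniq_leq_size; first exact: filter_uniq.
move=> v; rewrite mem_filter mem_enum => /andP [Hv Hvs].
exact: memQ.
Qed.
Local Open Scope R_scope.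

Theorem mainTheorem4 (U : finType) (k : nat) (P : 'I_k -> {set U})
  (delta : R) (L : {set U}) (BG OPT : U -> 'I_k) :
  0 <= delta <= 1 ->
  (0 < #|U|)%N ->
  (forall u : U, exists i : 'I_k, u \in P i) ->
  is_BiasedGreedy_output P delta L BG ->
  is_cover P OPT ->
  let n := #|U| in
  let a := fun v : U => #|P (BG v)| in
  let x := fun i : 'I_k => #|[set v | OPT v == i]| in
  let y := fun i : 'I_k => #|[set v | (OPT v == i) && (v \notin L)]| in
  (forall (i : 'I_k) (v : U), OPT v = i -> v \in L -> (x i <= a v)%N) /\
  (forall i : 'I_k,
     ((y i)`! <= \prod_(v | (OPT v == i) && (v \notin L)) a v)%N) /\
  (- (1 / INR n) * \big[Rplus/0]_(v : U) log2 (INR (a v))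
     <= Ent OPT - log2 (INR n)
        - (1 / INR n) * \big[Rplus/0]_(i < k) ylogyx (y i) (x i)
        + ((INR n - INR (nceil (delta * INR n))) / INR n) * log2 (exp 1)).
Proof.
move=> Hdelta Hn Hcov0 [HL [Hfreq [Hph1 [s [us [ms Hph2]]]]]] cov n a x y.
have part1 : forall (i : 'I_k) (v : U), OPT v = i -> v \in L -> (x i <= a v)%N.
  move=> i v Hv HvL; have [HvP Hmax] := Hph1 v HvL.
  apply: (leq_trans _ (Hmax i _)); last by rewrite -Hv; exact: cov.
  apply: subset_leq_card; apply/subsetP => u; rewrite inE => /eqP <-; exact: cov.
have apos : forall v, (0 < a v)%N.
  move=> v; rewrite /a card_gt0; apply/set0Pn; exists v.
  case: (boolP (v \in L)) => HvL; first by case: (Hph1 v HvL).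
  have : v \in s by rewrite ms.
  move=> Hvs.
  have Es : s = take (index v s) s ++ v :: drop (index v s).+1 s.
    have := drop_nth v (n := index v s) (s := s) ltac:(by rewrite index_mem); rewrite nth_index // => H.
    by rewrite -H cat_take_drop.
  move: (Hph2 _ _ _ Es); cbv zeta => -[Hin _].
  by move: Hin; rewrite !inE => /andP [_ /andP [_ ->]].
have ycount : forall i, y i = count (fun v => OPT v == i) s.
  move=> i; rewrite /y -sum1_card.
  rewrite (eq_bigl (fun v => (OPT v == i) && (v \notin L))); last by move=> v; rewrite inE.
  by rewrite (@big_seq_set _ _ _ _ s _ _ _ us ms) sum1_count.
have part2 : forall i : 'I_k,
     ((y i)`! <= \prod_(v | (OPT v == i) && (v \notin L)) a v)%N.
  move=> i; rewrite (@big_seq_set _ _ _ _ s _ _ _ us ms) ycount.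
  exact: (@greedy_prod U k P L BG OPT s i cov us ms Hph2 [::] s erefl).
split; first exact: part1.
split; first exact: part2.
have xsum : forall i, x i = (\sum_(v | OPT v == i) 1)%N.
  by move=> i; rewrite /x -sum1_card; apply: eq_bigl => v; rewrite inE.
have ysum : forall i, y i = (\sum_(v | (OPT v == i) && ~~ (v \in L)) 1)%N.
  by move=> i; rewrite /y -sum1_card; apply: eq_bigl => v; rewrite inE.
have xLy : forall i, (\sum_(v | (OPT v == i) && (v \in L)) 1 + y i)%N = x i.
  by move=> i; rewrite xsum ysum [in RHS](bigID (fun v => v \in L)).
have Sx : (\sum_(i < k) x i)%N = n.
  rewrite (eq_bigr _ (fun i _ => xsum i)).
  rewrite -(partition_big OPT predT (P := predT)) //.
  by rewrite sum1_card.
have Sy : (#|L| + \sum_(i < k) y i)%N = n.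
  rewrite (eq_bigr _ (fun i _ => ysum i)).
  under eq_bigr do under eq_bigl do rewrite andbC.
  rewrite -(partition_big OPT predT (P := fun v => ~~ (v \in L))) //.
  rewrite sum1_card.
  exact: cardC.
have l2pos : 0 < ln 2 by have := ln_lt_2; lra.
have npos : 0 < INR n by apply: lt_0_INR; apply/ltP.
set m := / INR n.
have mpos : 0 < m by apply: Rinv_0_lt_compat.
have nm : INR n * m = 1 by rewrite /m Rinv_r //; lra.
have yx : forall i, (y i <= x i)%N by move=> i; rewrite -xLy leq_addl.
have INRpos : forall c, (0 < c)%N -> 0 < INR c by move=> c Hc; apply: lt_0_INR; apply/ltP.
have Bbound : forall i,
  INR (x i) * ln (INR (x i)) + (INR (y i) * ln (INR (y i)) - INR (y i) * ln (INR (x i)))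
    - INR (y i) <= \big[Rplus/0]_(v | OPT v == i) ln (INR (a v)).
  move=> i.
  rewrite (bigID (fun v => v \in L)) /=.
  have H1 : ln (INR (x i)) * INR (\sum_(v | (OPT v == i) && (v \in L)) 1)%N <=
      \big[Rplus/0]_(v | (OPT v == i) && (v \in L)) ln (INR (a v)).
    rewrite -sumR_INR -sumR_scale; apply: sumR_le => v /andP [/eqP Hv HvL].
    rewrite /= Rmult_1_r; apply: ln_le'.
      apply: INRpos; rewrite /x card_gt0; apply/set0Pn; exists v; by rewrite inE Hv.
    by apply: le_INR; apply/leP; exact: part1.
  have H2 : INR (y i) * ln (INR (y i)) - INR (y i) <=
      \big[Rplus/0]_(v | (OPT v == i) && ~~ (v \in L)) ln (INR (a v)).
    rewrite -ln_prod; last by move=> v _; exact: apos.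
    apply: Rle_trans (ln_fact _) _; apply: ln_le'.
      by apply: INRpos; exact: fact_gt0.
    by apply: le_INR; apply/leP; exact: part2.
  have H3 : INR (\sum_(v | (OPT v == i) && (v \in L)) 1)%N = INR (x i) - INR (y i).
    by rewrite -(xLy i) plus_INR; ring.
  rewrite H3 in H1.
  have : ln (INR (x i)) * (INR (x i) - INR (y i)) = INR (x i) * ln (INR (x i)) - INR (y i) * ln (INR (x i)) by ring.
  lra.
have HN : forall i, negplogp (x i) n =
    (- (INR (x i) * m) * ln (INR (x i)) + (INR (x i) * m) * ln (INR n)) / ln 2.
  move=> i; rewrite /negplogp; case: eqP => [->|Hx0]; first by rewrite /=; field; lra.
  have Xpos : 0 < INR (x i) by apply: INRpos; rewrite lt0n; apply/eqP.
  rewrite /log2 /Rdiv (ln_mult _ _ Xpos (Rinv_0_lt_compat _ npos)) (ln_Rinv _ npos).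
  rewrite /m; field; lra.
have HY : forall i, ylogyx (y i) (x i) =
    (INR (y i) * ln (INR (y i)) - INR (y i) * ln (INR (x i))) / ln 2.
  move=> i; rewrite /ylogyx; case: eqP => [->|Hy0]; first by rewrite /=; field; lra.
  have Ypos : 0 < INR (y i) by apply: INRpos; rewrite lt0n; apply/eqP.
  have Xpos : 0 < INR (x i).
    by apply: INRpos; apply: leq_trans (yx i); rewrite lt0n; apply/eqP.
  rewrite /log2 /Rdiv (ln_mult _ _ Ypos (Rinv_0_lt_compat _ Xpos)) (ln_Rinv _ Xpos).
  field; lra.
have HA : forall i, \big[Rplus/0]_(v | OPT v == i) log2 (INR (a v)) =
    \big[Rplus/0]_(v | OPT v == i) ln (INR (a v)) / ln 2.
  by move=> i; rewrite /log2 /Rdiv sumR_scaler.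
have Hpart : \big[Rplus/0]_(v : U) log2 (INR (a v)) =
    \big[Rplus/0]_(i < k) \big[Rplus/0]_(v | OPT v == i) log2 (INR (a v)).
  by rewrite (partition_big OPT predT).
have Hf : 0 <= \big[Rplus/0]_(i < k) (negplogp (x i) n - INR (x i) * (m * log2 (INR n))
    - m * ylogyx (y i) (x i) + INR (y i) * (m * log2 (exp 1))
    + m * \big[Rplus/0]_(v | OPT v == i) log2 (INR (a v))).
  have Z : \big[Rplus/0]_(i < k) (IZR 0) = 0 by rewrite big1.
  apply: Rle_trans (Req_le _ _ (esym Z)) _.
  apply: sumR_le => i _.
  rewrite HA HN HY /log2 ln_exp.
  have Hb := Bbound i.
  apply: (Rle_trans _ (m * (\big[Rplus/0]_(v | OPT v == i) ln (INR (a v)) -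
     (INR (x i) * ln (INR (x i)) + (INR (y i) * ln (INR (y i)) - INR (y i) * ln (INR (x i)))
    - INR (y i))) / ln 2)).
    apply: Rmult_le_pos; last by left; apply: Rinv_0_lt_compat.
    apply: Rmult_le_pos; lra.
  right; rewrite /m; field; lra.
rewrite !sumR_add !sumR_opp !sumR_scale !sumR_scaler -Hpart !sumR_INR Sx in Hf.
have Ey : INR (\sum_(i < k) y i)%N = INR n - INR (nceil (delta * INR n)).
  rewrite -HL -Sy plus_INR; ring.
rewrite Ey in Hf.
have EEnt : Ent OPT = \big[Rplus/0]_(i < k) negplogp (x i) n by [].
rewrite EEnt.
have E1 : INR n * (m * log2 (INR n)) = log2 (INR n) by rewrite -Rmult_assoc nm Rmult_1_l.
rewrite E1 in Hf.
have E2 : 1 / INR n = m by rewrite /m /Rdiv Rmult_1_l.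
rewrite E2.
have E3 : (INR n - INR (nceil (delta * INR n))) / INR n = (INR n - INR (nceil (delta * INR n))) * m by [].
rewrite E3.
rewrite Rmult_assoc; clearbody m.
set S1 := \big[Rplus/0]_(i < k) negplogp (x i) n in Hf *.
set S2 := \big[Rplus/0]_(i < k) ylogyx (y i) (x i) in Hf *.
set S3 := \big[Rplus/0]_(v : U) log2 (INR (a v)) in Hf *.
clearbody S1 S2 S3.
lra.
Qed.
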